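(* Let $\Omega$ be the closure of a bounded domain in $\mathbb{R}^d$, let $X$ be a Banach space of functions on $\Omega$ with $C(\Omega)\subset X$ and $\|g\|_X\le C_X\|g\|_{C(\Omega)}$ for $g\in C(\Omega)$, and let $K$ be a compact subset of $C(\Omega)$. Let ${\bf x}=(x_1,\dots,x_m)\in\Omega^m$, $f\in K$, $0<\gamma\le1$, and let $\tilde w=\lambda_{\bf x}(f)+\boldsymbol\eta$ with $\boldsymbol\eta\in\mathbb{R}^m$, $\|\boldsymbol\eta\|\le\gamma$. Assume $R(K(\tilde w,\gamma))_X\neq0$. For $\tau>0$ define on $C(\Omega)$ $$\mathcal{L}_{K,\tau}(g):=\tau\|\tilde w-\lambda_{\bf x}(g)\|+\operatorname{dist}(g,K)_{C(\Omega)} .$$ Then for every $C>2$ there is $\tau_0>0$ such that for all $0<\tau\le\tau_0$, all $\delta$ with $0<\delta\le\tau^2$, all $\Sigma\subset C(\Omega)$ with $\operatorname{dist}(K,\Sigma)_{C(\Omega)}<\delta$, and any minimizer $\hat f\in\mathop{\rm argmin}_{g\in\Sigma}\mathcal{L}_{K,\tau}(g)$, $$\|f-\hat f\|_X\le C\,R(K(\tilde w,\gamma))_X .$$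
   Context: $\lambda_{\bf x}(g):=(g(x_1),\dots,g(x_m))$; on $\mathbb{R}^m$, $\|v\|:=\big[\frac1m\sum_{j=1}^m|v_j|^2\big]^{1/2}$. $\operatorname{dist}(g,K)_{C(\Omega)}:=\inf_{h\in K}\|g-h\|_{C(\Omega)}$; for $A,B\subset C(\Omega)$, $\operatorname{dist}(A,B)_{C(\Omega)}:=\sup_{a\in A}\inf_{b\in B}\|a-b\|_{C(\Omega)}$. $K_{w'}:=\{h\in K:\lambda_{\bf x}(h)=w'\}$, $K(w,\varepsilon):=\bigcup_{w'\in\mathbb{R}^m,\ \|w'-w\|\le\varepsilon}K_{w'}$. For $S\subset X$, $R(S)_X:=\inf\{r:\ S\subset B(z,r)_X\text{ for some }z\in X\}$ (Chebyshev radius in $X$). *)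

(* Defs.v *)
From HB Require Import structures.
From mathcomp Require Import all_boot all_order all_algebra.
From mathcomp Require Import all_classical all_reals all_analysis.
Set Implicit Arguments. Unset Strict Implicit. Unset Printing Implicit Defensive.
Import Order.TTheory GRing.Theory Num.Theory.
Import numFieldNormedType.Exports.
Local Open Scope classical_set_scope.
Local Open Scope ring_scope.

Section Defs.
Variables (R : realType) (d m : nat).
Notation pt := 'rV[R]_d.

Definition closure_of_bounded_domain (Om : set pt) : Prop :=
  exists D : set pt, [/\ open D, connected D, D !=set0, bounded_set D
                       & Om = closure D].

(* C(Omega): functions continuous on Omega (identified when equal on Omega) *)
Definition CO (Om : set pt) : set (pt -> R) :=
  [set g | {within Om, continuous g}].

Definition normC (Om : set pt) (g : pt -> R) : R :=
  sup [set `|g y| | y in Om].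

Definition lam (x : 'I_m -> pt) (g : pt -> R) : 'I_m -> R := fun i => g (x i).

Definition vnorm (v : 'I_m -> R) : R :=
  Num.sqrt ((m%:R)^-1 * \sum_(i < m) v i ^+ 2).

Definition distC (Om : set pt) (g : pt -> R) (K : set (pt -> R)) : R :=
  inf [set normC Om (g \- h) | h in K].

Definition distCS (Om : set pt) (A B : set (pt -> R)) : R :=
  sup [set inf [set normC Om (a \- b) | b in B] | a in A].

Definition Kw (x : 'I_m -> pt) (K : set (pt -> R)) (w' : 'I_m -> R) :=
  [set h | K h /\ lam x h = w'].

Definition Kweps (x : 'I_m -> pt) (K : set (pt -> R)) (w : 'I_m -> R) (eps : R) :=
  \bigcup_(w' in [set w' : 'I_m -> R | vnorm (w' \- w) <= eps]) Kw x K w'.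

Definition LKtau (Om : set pt) (x : 'I_m -> pt) (K : set (pt -> R))
  (wt : 'I_m -> R) (tau : R) (g : pt -> R) : R :=
  tau * vnorm (wt \- lam x g) + distC Om g K.

End Defs.

Definition cheb_radius (R : realType) (V : normedModType R) (S : set V) : R :=
  inf [set r : R | exists z : V, forall s, S s -> `|s - z| <= r].

(* Main.v *)
Require Import Defs.
From HB Require Import structures.
From mathcomp Require Import all_boot all_order all_algebra.
From mathcomp Require Import all_classical all_reals all_analysis.
From mathcomp Require Import ring lra.
Import Order.TTheory GRing.Theory Num.Theory.
Import numFieldNormedType.Exports.
Local Open Scope classical_set_scope.
Local Open Scope ring_scope.


Section H.
Variables (R : realType) (d : nat).
Notation pt := 'rV[R]_d.

Lemma bounded_ex (V : normedModType R) (A : set V) : bounded_set A ->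
  exists M, forall x, A x -> `|x| <= M.
Proof.
move=> [M [Mr HM]]; exists (M + 1) => x Ax.
by apply: (HM (M+1)) => //; rewrite ltrDl.
Qed.

Lemma Om_compact (Om : set pt) : (exists D : set pt, bounded_set D /\ Om = closure D) -> compact Om.
Proof.
move=> [D [bD ->]].
have [M HM] := @bounded_ex _ D bD.
pose B := closed_ball_ Num.norm (0 : pt) (`|M| + 1).
have DB : D `<=` B.
  move=> x Dx; rewrite /B /closed_ball_ /= sub0r normrN.
  by rewrite (le_trans (HM _ Dx)) // (le_trans (ler_norm _)) // lerDl.
have cB : closed B by exact: closed_closed_ball_.
apply: (@subclosed_compact _ _ B (@closed_closure _ D)).
  apply: bounded_closed_compact => //.
  exists (`|M| + 1); split; first by rewrite realE; apply/orP; left; rewrite addr_ge0.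
  move=> r Hr y By.
  have Hy : `|y| <= `|M|+1 by move: By; rewrite /B /closed_ball_ /= sub0r normrN.
  by apply: (le_trans Hy); rewrite ltW.
have BB : B = closure B by apply/closure_id.
by rewrite BB; exact: closureS.
Qed.

Lemma CO_bounded (Om : set pt) (g : pt -> R) : compact Om -> {within Om, continuous g} ->
  exists M, forall y, Om y -> `|g y| <= M.
Proof.
move=> cO cg.
have := continuous_compact cg cO => /compact_bounded /bounded_ex [M HM].
by exists M => y Oy; apply: HM; exists y.
Qed.

End H.


Section V2.
Variables (R : realType) (m : nat).

Definition E2 (v : 'I_m -> R) := Num.sqrt (\sum_(i < m) v i ^+ 2).

Lemma sumsq_ge0 (v : 'I_m -> R) : 0 <= \sum_(i < m) v i ^+ 2.
Proof. by apply: sumr_ge0 => i _; exact: sqr_ge0. Qed.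

Lemma CS (a b : 'I_m -> R) : \sum_(i < m) a i * b i <= E2 a * E2 b.
Proof.
have [A0|An0] := eqVneq (E2 a) 0.
  have : \sum_(i < m) a i ^+ 2 = 0.
    by move: A0; rewrite /E2 => /eqP; rewrite sqrtr_eq0 => H; apply/eqP; rewrite eq_le H sumsq_ge0.
  move/eqP; rewrite psumr_eq0; last by move=> i _; exact: sqr_ge0.
  move=> /allP H; rewrite A0 mul0r big1 // => i _.
  have /H : i \in index_enum 'I_m by rewrite mem_index_enum.
  by rewrite /= sqrf_eq0 => /eqP ->; rewrite mul0r.
have [B0|Bn0] := eqVneq (E2 b) 0.
  have : \sum_(i < m) b i ^+ 2 = 0.
    by move: B0; rewrite /E2 => /eqP; rewrite sqrtr_eq0 => H; apply/eqP; rewrite eq_le H sumsq_ge0.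
  move/eqP; rewrite psumr_eq0; last by move=> i _; exact: sqr_ge0.
  move=> /allP H; rewrite B0 mulr0 big1 // => i _.
  have /H : i \in index_enum 'I_m by rewrite mem_index_enum.
  by rewrite /= sqrf_eq0 => /eqP ->; rewrite mulr0.
set sa := E2 a; set sb := E2 b.
have sa0 : 0 < sa by rewrite lt_neqAle eq_sym An0 sqrtr_ge0.
have sb0 : 0 < sb by rewrite lt_neqAle eq_sym Bn0 sqrtr_ge0.
have HA : \sum_(i < m) a i ^+ 2 = sa ^+ 2 by rewrite sqr_sqrtr // sumsq_ge0.
have HB : \sum_(i < m) b i ^+ 2 = sb ^+ 2 by rewrite sqr_sqrtr // sumsq_ge0.
have key : \sum_(i < m) (2 * sa * sb) * (a i * b i) <=
           \sum_(i < m) (sb ^+ 2 * a i ^+ 2 + sa ^+ 2 * b i ^+ 2).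
  apply: ler_sum => i _.
  have := sqr_ge0 (sb * a i - sa * b i); nra.
move: key; rewrite -mulr_sumr big_split /= -!mulr_sumr HA HB => key.
have p : 0 < 2 * sa * sb by rewrite !mulr_gt0.
rewrite -(ler_pM2l p); apply: (le_trans key); rewrite le_eqVlt; apply/orP; left; apply/eqP; ring.
Qed.

Lemma E2_tri (a b : 'I_m -> R) : E2 (a \+ b) <= E2 a + E2 b.
Proof.
have ge : 0 <= E2 a + E2 b by rewrite addr_ge0 // sqrtr_ge0.
rewrite -(ger0_norm ge) -sqrtr_sqr /E2 ler_sqrt; last exact: sqr_ge0.
have -> : \sum_(i < m) (a \+ b) i ^+ 2 = \sum_(i < m) a i ^+ 2 + 2 * \sum_(i < m) (a i * b i) + \sum_(i < m) b i ^+ 2.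
  rewrite mulr_sumr -!big_split /=; apply: eq_bigr => i _; ring.
rewrite sqrrD !sqr_sqrtr ?sumsq_ge0 //.
have := CS a b; rewrite /E2; lra.
Qed.

End V2.
Arguments E2 {R m} v.


Section U.
Variables (R : realType) (d : nat).
Notation pt := 'rV[R]_d.

Lemma unif_compact_img (Om : set pt) (K : set (pt -> R)) (Psi : (pt -> R) -> R) :
  compact (K : set {uniform` Om -> R}) ->
  (forall h, K h -> forall e, 0 < e -> exists2 r, 0 < r &
     forall g, K g -> (forall y, Om y -> `|h y - g y| < r) -> `|Psi h - Psi g| < e) ->
  compact (Psi @` K).
Proof.
move=> cK cP.
apply: (@continuous_compact {uniform` Om -> R} R Psi K) => //.
apply/subspace_continuousP => h Kh.
apply/cvgrPdist_lt => e e0.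
have [r r0 H] := cP h Kh e e0.
have N : nbhs (h : {uniform` Om -> R}) [set g | forall y, Om y -> `|h y - g y| < r].
  apply/uniform_nbhs; exists [set xy | ball xy.1 r xy.2]; split.
    by rewrite -entourage_ballE; exists r.
  by move=> g /= Hg y Oy; have := Hg y Oy; rewrite -ball_normE.
rewrite /within; apply: filterS N => g Hg Kg; exact: H.
Qed.

End U.


Section U2.
Variables (R : realType) (T : Type).

Lemma cpt_ub (K : set T) (Psi : T -> R) : compact (Psi @` K) ->
  exists M, forall h, K h -> Psi h <= M.
Proof.
move=> /compact_bounded [M [Mr HM]]; exists (M + 1) => h Kh.
have : `|Psi h| <= M + 1 by apply: (HM (M+1)); [rewrite ltrDl | exists h].
exact: le_trans (ler_norm _).
Qed.

Lemma cpt_lb (K : set T) (Psi : T -> R) : compact (Psi @` K) ->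
  (forall h, K h -> 0 < Psi h) -> exists2 c, 0 < c & forall h, K h -> c <= Psi h.
Proof.
move=> cK pos.
have cl : closed (Psi @` K) := compact_closed (@norm_hausdorff _ R) cK.
have n0 : ~ (Psi @` K) 0 by case=> h Kh E; have := pos h Kh; rewrite E ltxx.
have : ~ closure (Psi @` K) 0 by move=> /cl.
rewrite /closure => /existsNP [B] /not_implyP [nB nI].
have [e /= e0 sB] := (nbhs_ballP _ _).1 nB.
exists e => // h Kh; rewrite leNgt; apply/negP => lt; apply: nI.
exists (Psi h); split; first by exists h.
apply: sB; rewrite -ball_normE /= sub0r normrN gtr0_norm //; exact: pos.
Qed.

End U2.


Section N.
Variables (R : realType) (d : nat).
Notation pt := 'rV[R]_d.
Implicit Types (Om : set pt) (g h : pt -> R) (K S : set (pt -> R)).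

Lemma normC_ge0 Om g : 0 <= normC Om g.
Proof.
rewrite /normC; have [hs|nhs] := pselect (has_sup [set `|g y| | y in Om]).
  case: (hs) => -[_ [y Oy _]] _; apply: le_trans (normr_ge0 (g y)) _.
  by apply: sup_upper_bound => //; exists y.
by rewrite sup_out.
Qed.

Lemma normC_ub Om g : (exists M, forall y, Om y -> `|g y| <= M) ->
  forall y, Om y -> `|g y| <= normC Om g.
Proof.
move=> [M HM] y Oy; apply: ub_le_sup; last by exists y.
by exists M => _ [z Oz <-]; exact: HM.
Qed.

Lemma normC_le Om g M : 0 <= M -> (forall y, Om y -> `|g y| <= M) -> normC Om g <= M.
Proof.
move=> M0 HM; rewrite /normC.
have [->|ne] := eqVneq [set `|g y| | y in Om] set0; first by rewrite sup0.
by apply: ge_sup; [exact/set0P | move=> _ [z Oz <-]; exact: HM].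
Qed.

Lemma distC_le Om g K h : K h -> distC Om g K <= normC Om (g \- h).
Proof.
move=> Kh; apply: ge_inf; last by exists h.
by exists 0 => _ [k _ <-]; exact: normC_ge0.
Qed.

Lemma distC_ge0 Om g K : K !=set0 -> 0 <= distC Om g K.
Proof.
move=> [h Kh]; apply: lb_le_inf; first by exists (normC Om (g \- h)), h.
by move=> _ [k _ <-]; exact: normC_ge0.
Qed.

Lemma distC_lt Om g K e : K !=set0 -> distC Om g K < e ->
  exists2 h, K h & normC Om (g \- h) < e.
Proof.
move=> [h0 Kh0] /inf_lt []; first by exists (normC Om (g \- h0)), h0.
by move=> _ [h Kh <-] lt; exists h.
Qed.

Lemma distCS_ge Om K S a : K a ->
  has_ubound [set inf [set normC Om (a \- b) | b in S] | a in K] ->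
  inf [set normC Om (a \- b) | b in S] <= distCS Om K S.
Proof. by move=> Ka ub; apply: ub_le_sup => //; exists a. Qed.

Lemma inf_le_elt Om a S b : S b -> inf [set normC Om (a \- b) | b in S] <= normC Om (a \- b).
Proof.
move=> Sb; apply: ge_inf; last by exists b.
by exists 0 => _ [k _ <-]; exact: normC_ge0.
Qed.

Lemma inf_lt_elt Om a S e : S !=set0 -> inf [set normC Om (a \- b) | b in S] < e ->
  exists2 b, S b & normC Om (a \- b) < e.
Proof.
move=> [h0 Kh0] /inf_lt []; first by exists (normC Om (a \- h0)), h0.
by move=> _ [h Kh <-] lt; exists h.
Qed.

End N.

Section Ch.
Variables (R : realType) (V : normedModType R).

Lemma cheb_ge0 (S : set V) : S !=set0 -> 0 <= cheb_radius S.
Proof.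
move=> [s0 Ss0]; rewrite /cheb_radius.
set E := [set r : R | _].
have [->|ne] := eqVneq E set0; first by rewrite inf0.
apply: lb_le_inf; first exact/set0P.
by move=> r [z Hz]; apply: le_trans (Hz _ Ss0).
Qed.

Lemma cheb_near (S : set V) e : cheb_radius S != 0 -> 0 < e ->
  exists z, forall s, S s -> `|s - z| <= cheb_radius S + e.
Proof.
move=> c0 e0; rewrite /cheb_radius in c0 *.
set E := [set r : R | _] in c0 *.
have ne : E !=set0.
  by apply/set0P; apply: contra c0 => /eqP ->; rewrite inf0.
have lt0 : inf E < inf E + e by rewrite ltrDl.
have [r [z Hz] lt] := inf_lt ne lt0.
by exists z => s Ss; apply: le_trans (Hz _ Ss) (ltW lt).
Qed.

End Ch.


Section V.
Variables (R : realType) (m : nat).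


Lemma sqr_normr' (x : R) : `|x| ^+ 2 = x ^+ 2.
Proof. exact: real_normK (num_real x). Qed.

Lemma vnormE (v : 'I_m -> R) : vnorm v = Num.sqrt (m%:R^-1) * E2 v.
Proof. by rewrite /vnorm sqrtrM // invr_ge0 ler0n. Qed.

Lemma vnorm_ge0 (v : 'I_m -> R) : 0 <= vnorm v.
Proof. exact: sqrtr_ge0. Qed.

Lemma vnorm_abs (u v : 'I_m -> R) : (forall i, `|u i| = `|v i|) -> vnorm u = vnorm v.
Proof.
move=> H; rewrite /vnorm; congr (Num.sqrt (_ * _)); apply: eq_bigr => i _.
by rewrite -sqr_normr' H sqr_normr'.
Qed.

Lemma vnorm_le (v : 'I_m -> R) c : (0 < m)%N -> 0 <= c -> (forall i, `|v i| <= c) -> vnorm v <= c.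
Proof.
move=> m0 c0 H; rewrite /vnorm -(ger0_norm c0) -sqrtr_sqr ler_sqrt; last exact: sqr_ge0.
have : \sum_(i < m) v i ^+ 2 <= \sum_(i < m) c ^+ 2.
  apply: ler_sum => i _; rewrite -sqr_normr'.
  have := H i; have := normr_ge0 (v i); nra.
rewrite sumr_const card_ord => H2.
have mp : 0 < m%:R :> R by rewrite ltr0n.
rewrite -(ler_pM2l mp) mulrA mulfV ?gt_eqF // mul1r.
by rewrite mulr_natl.
Qed.

Lemma vnorm_tri (u v : 'I_m -> R) : vnorm (u \+ v) <= vnorm u + vnorm v.
Proof.
rewrite !vnormE -mulrDr; apply: ler_wpM2l; first exact: sqrtr_ge0.
exact: E2_tri.
Qed.

Lemma max_lip (a b c e : R) : `|a - c| < e -> `|b - c| < e ->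
  `|Num.max a b - c| < e.
Proof.
move=> ha hb; case: (leP a b) => hh; [exact: hb | exact: ha].
Qed.

Lemma max_lip2 (a1 b1 a2 b2 e : R) : `|a1 - a2| < e -> `|b1 - b2| < e ->
  `|Num.max a1 b1 - Num.max a2 b2| < e.
Proof.
rewrite !ltr_norml => /andP[h1 h1'] /andP[h2 h2'].
by case: (leP a1 b1) => ?; case: (leP a2 b2) => ?; apply/andP; split; lra.
Qed.

End V.

Lemma vnorm_lip (R : realType) (m : nat) (u v : 'I_m -> R) :
  `|vnorm u - vnorm v| <= vnorm (u \- v).
Proof.
have h1 : vnorm u <= vnorm (u \- v) + vnorm v.
  have {1}-> : u = (u \- v) \+ v by apply/funext => i /=; rewrite subrK.
  exact: vnorm_tri.
have h2 : vnorm v <= vnorm (u \- v) + vnorm u.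
  have -> : vnorm (u \- v) = vnorm (v \- u) by apply: vnorm_abs => i /=; rewrite distrC.
  have {1}-> : v = (v \- u) \+ u by apply/funext => i /=; rewrite subrK.
  exact: vnorm_tri.
rewrite ler_norml; apply/andP; split; lra.
Qed.

Theorem theorem5p1 (R : realType) (d m : nat) (Om : set 'rV[R]_d)
  (V : completeNormedModType R) (j : ('rV[R]_d -> R) -> V) (CX : R)
  (K : set ('rV[R]_d -> R)) (x : 'I_m -> 'rV[R]_d) (f : 'rV[R]_d -> R)
  (gamma : R) (eta : 'I_m -> R) :
  closure_of_bounded_domain Om ->
  (* X: Banach space with C(Om) embedded linearly, injectively, continuously *)
  (forall g h, CO Om g -> CO Om h -> {in Om, g =1 h} -> j g = j h) ->
  (forall g h, CO Om g -> CO Om h -> j g = j h -> {in Om, g =1 h}) ->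
  (forall g h, CO Om g -> CO Om h -> j (g \+ h) = j g + j h) ->
  (forall (a : R) g, CO Om g -> j (fun y => a * g y) = a *: j g) ->
  (forall g, CO Om g -> `|j g| <= CX * normC Om g) ->
  (* K compact subset of C(Om) *)
  K `<=` CO Om ->
  compact (K : set {uniform` Om -> R}) ->
  (0 < m)%N ->
  (forall i, Om (x i)) ->
  K f ->
  0 < gamma <= 1 ->
  vnorm eta <= gamma ->
  let wt := lam x f \+ eta in
  cheb_radius (j @` Kweps x K wt gamma) != 0 ->
  forall C : R, 2 < C ->
  exists tau0 : R, 0 < tau0 /\
    forall tau : R, 0 < tau <= tau0 ->
    forall delta : R, 0 < delta <= tau ^+ 2 ->
    forall Sigma : set ('rV[R]_d -> R), Sigma `<=` CO Om ->
      distCS Om K Sigma < delta ->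
    forall fh, Sigma fh ->
      (forall g, Sigma g -> LKtau Om x K wt tau fh <= LKtau Om x K wt tau g) ->
      `|j (f \- fh)| <= C * cheb_radius (j @` Kweps x K wt gamma).
Proof.
move=> hOm hj1 hj2 hjadd hjscal hjb KCO cK m0 xOm Kf /andP[g0 g1] heta wt hR C hC.
have cO : compact Om.
  by apply: Om_compact; case: hOm => D [_ _ _ bD ->]; exists D.
have bnd : forall g, CO Om g -> exists M, forall y, Om y -> `|g y| <= M.
  by move=> g; exact: CO_bounded.
have COB : forall g h, CO Om g -> CO Om h -> CO Om (g \- h).
  by move=> g h cg ch; exact: within_continuousB.
have COsc : forall g, CO Om g -> CO Om (fun y => -1 * g y).
  move=> g cg; have -> : (fun y => -1 * g y) = (fun _ => 0) \- g.
    by apply/funext => y /=; rewrite mulN1r sub0r.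
  apply: COB => //; apply: continuous_subspaceT; exact: cst_continuous.
have jB : forall g h, CO Om g -> CO Om h -> j (g \- h) = j g - j h.
  move=> g h cg ch; have -> : g \- h = g \+ (fun y => -1 * h y).
    by apply/funext => y /=; rewrite mulN1r.
  rewrite hjadd //; last exact: COsc.
  rewrite (_ : j (fun y => -1 * h y) = (-1) *: j h); last exact: hjscal.
  by rewrite scaleN1r.
have ptw : forall g, CO Om g -> forall y, Om y -> `|g y| <= normC Om g.
  by move=> g cg; apply: normC_ub; exact: bnd.
have normC_tri : forall g h, CO Om g -> CO Om h ->
    normC Om (g \- h) <= normC Om g + normC Om h.
  move=> g h cg ch; apply: normC_le; first by rewrite addr_ge0 // normC_ge0.
  move=> y Oy /=; apply: le_trans (ler_normB _ _) _.
  by apply: lerD; exact: ptw.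
have normC_sym : forall g h, normC Om (g \- h) = normC Om (h \- g).
  move=> g h; rewrite /normC; congr sup.
  by apply/seteqP; split => _ [y Oy <-]; exists y => //=; rewrite distrC.
have normC_rev : forall g h, CO Om g -> CO Om h ->
    normC Om h <= normC Om (h \- g) + normC Om g.
  move=> g h cg ch; apply: normC_le; first by rewrite addr_ge0 // normC_ge0.
  move=> y Oy; have -> : h y = (h y - g y) + g y by rewrite subrK.
  apply: le_trans (ler_normD _ _) _; apply: lerD; last exact: ptw.
  by have := ptw _ (COB _ _ ch cg) y Oy.
pose S := Kweps x K wt gamma.
have Sin : forall h, K h -> vnorm (lam x h \- wt) <= gamma -> S h.
  by move=> h Kh hv; exists (lam x h) => //.
have fS : S f.
  apply: Sin => //; apply: le_trans heta; rewrite le_eqVlt; apply/orP; left; apply/eqP.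
  by apply: vnorm_abs => i; rewrite /wt /lam /= opprD addrA subrr sub0r normrN.
set R0 := cheb_radius (j @` Kweps x K wt gamma).
have R0pos : 0 < R0.
  rewrite lt_neqAle eq_sym hR /=; apply: cheb_ge0; exists (j f); exists f => //.

pose eps := (C - 2) * R0 / 4.
have C2 : 0 < C - 2 by rewrite subr_gt0.
have eps0 : 0 < eps by rewrite /eps divr_gt0 // mulr_gt0.
have [z hz] := @cheb_near _ _ _ eps hR eps0.
have hzS : forall h, S h -> `|j h - z| <= R0 + eps.
  by move=> h Sh; apply: hz; exists h.
pose Psi := fun h => Num.max (vnorm (lam x h \- wt) - gamma)
                            (eps - (`|j h - z| - (R0 + eps))).
have CXp : 0 < `|CX| + 1 by rewrite ltr_pwDr.
have contPsi : forall h, K h -> forall e, 0 < e -> exists2 r, 0 < r &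
     forall g, K g -> (forall y, Om y -> `|h y - g y| < r) -> `|Psi h - Psi g| < e.
  move=> h Kh e e0; exists (e / (2 * (`|CX| + 1))).
    by rewrite divr_gt0 // mulr_gt0.
  set r := e / (2 * (`|CX| + 1)) => g Kg Hr.
  have r0 : 0 < r by rewrite divr_gt0 // mulr_gt0.
  have rCX : (`|CX| + 1) * r = e / 2.
    rewrite /r; field; rewrite gt_eqF //.
  have Hr' : forall y, Om y -> `|g y - h y| <= r.
    by move=> y Oy; rewrite distrC; apply: ltW; exact: Hr.
  apply: max_lip2.
  - have -> : vnorm (lam x h \- wt) - gamma - (vnorm (lam x g \- wt) - gamma)
              = vnorm (lam x h \- wt) - vnorm (lam x g \- wt) by ring.
    apply: le_lt_trans (vnorm_lip _ _ _ _) _.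
    have -> : vnorm ((lam x h \- wt) \- (lam x g \- wt)) = vnorm (fun i => h (x i) - g (x i)).
      by apply: vnorm_abs => i; rewrite /lam /= opprB addrA subrK.
    apply: (@le_lt_trans _ _ r).
      by apply: vnorm_le => // [|i]; [exact: ltW | apply: ltW; exact: Hr].
    have : (`|CX| + 1) * r <= e / 2 by rewrite rCX lexx.
    have : 0 <= `|CX| * r by apply: mulr_ge0 => //; exact: ltW.
    move=> ? ?; nra.
  - have -> : eps - (`|j h - z| - (R0 + eps)) - (eps - (`|j g - z| - (R0 + eps)))
              = `|j g - z| - `|j h - z| by ring.
    apply: le_lt_trans (ler_dist_dist _ _) _.
    rewrite opprB addrA subrK -jB; [|exact: KCO|exact: KCO].
    apply: le_lt_trans (hjb _ (COB _ _ (KCO _ Kg) (KCO _ Kh))) _.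
    have n0 := @normC_ge0 _ _ Om (g \- h).
    have nr : normC Om (g \- h) <= r by apply: normC_le; [exact: ltW | exact: Hr'].
    have : CX * normC Om (g \- h) <= `|CX| * r.
      apply: le_trans (ler_wpM2r n0 (ler_norm CX)) _.
      by apply: ler_wpM2l.
    have : 0 <= `|CX| * r by apply: mulr_ge0 => //; exact: ltW.
    move=> ? ?; nra.
have pos : forall h, K h -> 0 < Psi h.
  move=> h Kh; rewrite /Psi lt_max.
  case: (leP (vnorm (lam x h \- wt)) gamma) => hv.
    apply/orP; right; have := hzS h (Sin h Kh hv); lra.
  by apply/orP; left; rewrite subr_gt0.
have [c c0 hc] := @cpt_lb _ _ _ _ (@unif_compact_img _ _ _ _ _ cK contPsi) pos.
have near : forall h, K h -> vnorm (lam x h \- wt) - gamma < c ->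
    `|j h - z| < R0 + 2 * eps.
  move=> h Kh lt; have := hc h Kh; rewrite /Psi le_max => /orP[H|H]; lra.
have contN : forall h, K h -> forall e, 0 < e -> exists2 r, 0 < r &
     forall g, K g -> (forall y, Om y -> `|h y - g y| < r) ->
     `|normC Om h - normC Om g| < e.
  move=> h Kh e e0; exists (e / 2); first by rewrite divr_gt0.
  move=> g Kg Hr.
  have n1 : normC Om (h \- g) <= e / 2.
    by apply: normC_le; [rewrite ltW // divr_gt0 | move=> y Oy; apply: ltW; exact: Hr].
  have a1 := normC_rev g h (KCO _ Kg) (KCO _ Kh).
  have a2 := normC_rev h g (KCO _ Kh) (KCO _ Kg).
  move: a2; rewrite normC_sym => a2.
  rewrite ltr_norml; apply/andP; split; lra.
have [MK hMK] := @cpt_ub _ _ _ _ (@unif_compact_img _ _ _ _ _ cK contN).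
exists (Num.min 1 (Num.min (c / 7) (eps / (4 * (`|CX| + 1))))).
split.
  rewrite !lt_min ltr01 /= !divr_gt0 //; by rewrite mulr_gt0.
move=> tau /andP[t0]; rewrite !le_min => /and3P[t1 tc te].
move=> delta /andP[d0 dle] Sigma SCO hdist fh Sfh hmin.

have t2 : tau * tau <= tau by rewrite ler_piMr // ltW.
have dt : delta <= tau * tau by rewrite -expr2.
have dt1 : delta <= tau by apply: le_trans dt t2.
have COf := KCO _ Kf.
have COfh := SCO _ Sfh.
have ub : has_ubound [set inf [set normC Om (a \- b) | b in Sigma] | a in K].
  exists (MK + normC Om fh) => _ [a Ka <-].
  apply: le_trans (@inf_le_elt _ _ Om a Sigma fh Sfh) _.
  apply: le_trans (normC_tri _ _ (KCO _ Ka) COfh) _.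
  by apply: lerD => //; exact: hMK.
have hle := @distCS_ge _ _ Om K Sigma f Kf ub.
have [g Sg hg] := @inf_lt_elt _ _ Om f Sigma delta (ex_intro _ fh Sfh) (le_lt_trans hle hdist).
have COg := SCO _ Sg.
have ng0 := @normC_ge0 _ _ Om (f \- g).
have hv1 : vnorm (wt \- lam x g) <= gamma + normC Om (f \- g).
  have -> : wt \- lam x g = eta \+ (fun i => f (x i) - g (x i)).
    by apply/funext => i; rewrite /wt /lam /=; ring.
  apply: le_trans (vnorm_tri _ _ _ _) _; apply: lerD => //.
  apply: vnorm_le => // i; exact: (ptw _ (COB _ _ COf COg) _ (xOm i)).
have hd1 : distC Om g K <= normC Om (f \- g).
  by rewrite normC_sym; exact: distC_le.
have hL := hmin g Sg; rewrite /LKtau in hL.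
have v0 := @vnorm_ge0 _ _ (wt \- lam x fh).
have D0 : 0 <= distC Om fh K by apply: distC_ge0; exists f.
set v := vnorm (wt \- lam x fh) in hL v0.
set D := distC Om fh K in hL D0.
set vg := vnorm (wt \- lam x g) in hL hv1.
set n := normC Om (f \- g) in hg hv1 hd1 ng0.
have tv : tau * vg <= tau * gamma + tau * delta.
  rewrite -mulrDr; apply: ler_wpM2l; first exact: ltW.
  by apply: le_trans hv1 _; rewrite lerD2l ltW.
have tg : tau * gamma <= tau by rewrite ler_piMr // ltW.
have td : tau * delta <= tau * tau by apply: ler_wpM2l; [exact: ltW|].
have tv0 : 0 <= tau * v by rewrite mulr_ge0 // ltW.
have HD : D < 4 * tau by lra.
have Hv : tau * v <= tau * (gamma + 2 * tau) by lra.
move: Hv; rewrite ler_pM2l // => Hv.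
have [h Kh hh] := @distC_lt _ _ Om fh K (4 * tau) (ex_intro _ f Kf) HD.
have COh := KCO _ Kh.
have hv2 : vnorm (lam x h \- wt) <= v + normC Om (fh \- h).
  have -> : lam x h \- wt = (lam x fh \- wt) \+ (fun i => h (x i) - fh (x i)).
    by apply/funext => i; rewrite /lam /=; ring.
  apply: le_trans (vnorm_tri _ _ _ _) _; apply: lerD.
    by rewrite /v le_eqVlt; apply/orP; left; apply/eqP; apply: vnorm_abs => i; rewrite distrC.
  apply: vnorm_le => // [|i]; first exact: normC_ge0.
  rewrite distrC; exact: (ptw _ (COB _ _ COfh COh) _ (xOm i)).
have hnear := near h Kh.
have hjh : `|j h - z| < R0 + 2 * eps.
  apply: hnear; apply: le_lt_trans (_ : v + normC Om (fh \- h) - gamma < c).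
    by rewrite lerD2r.
  have : 7 * tau <= c by rewrite -ler_pdivlMl // mulrC.
  lra.
have hjf : `|j f - z| <= R0 + eps by apply: hzS.
have nh0 := @normC_ge0 _ _ Om (fh \- h).
have hjfh : `|j fh - j h| <= eps.
  rewrite -jB //; apply: le_trans (hjb _ (COB _ _ COfh COh)) _.
  apply: le_trans (ler_wpM2r nh0 (ler_norm CX)) _.
  apply: le_trans (_ : `|CX| * (4 * tau) <= eps).
    by apply: ler_wpM2l => //; exact: ltW.
  have : tau * (4 * (`|CX| + 1)) <= eps.
    by rewrite -ler_pdivlMr //; apply: mulr_gt0.
  move=> ?; nra.
rewrite jB //.
have tri : `|j f - j fh| <= `|j f - z| + (`|j h - z| + `|j fh - j h|).
  apply: le_trans (ler_distD z _ _) _; apply: lerD => //.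
  apply: le_trans (ler_distD (j h) _ _) _.
  by rewrite (distrC z (j h)) (distrC (j h) (j fh)) lexx.
have CR : C * R0 = 2 * R0 + 4 * eps by rewrite /eps; field.
rewrite CR; apply: le_trans tri _; lra.
Qed.
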